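(* Let $L$ be a non-trivial regular pseudocomplemented de Morgan algebra with dual $pm$-space $P$, and let $n<\omega$. Then $L$ is a simple algebra of $\mathbf{M}_n$ if and only if for all $x,y\in P$, $\ell(x,y)\le n$ or $\ell(x,\zeta(y))\le n$.
   Context: A $pm$-algebra is $(L;\wedge,\vee,{}^\ast,{}^\prime,0,1)$ with bounded distributive lattice reduct, pseudocomplement ${}^\ast$ and de Morgan involution ${}^\prime$; regular means any two congruences sharing a class are equal. $\mathbf{M}_n$ is the variety of regular $pm$-algebras satisfying $(x\wedge x^{\prime\ast})^{n(\prime\ast)}=(x\wedge x^{\prime\ast})^{(n+1)(\prime\ast)}$, where $x^{0(\prime\ast)}=x$, $x^{(k+1)(\prime\ast)}=((x^{k(\prime\ast)})')^\ast$. The dual $pm$-space is the Priestley space $(P;\tau,\le)$ of prime ideals with involution $\zeta(I)=\{a:a'\notin I\}$. $\ell(x,y)$ is the distance in the comparability graph of $(P;\le)$ ($0$ if $x=y$, $\infty$ if no path). *)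

(* Defs.v *)
From Stdlib Require Import Arith.

(** * pm-algebras: bounded distributive lattices with a pseudocomplement
      [pc] ( ^* ) and a de Morgan involution [neg] ( ' ). *)
Record pmAlgebra := PmAlgebra {
  car :> Type;
  meet : car -> car -> car;
  join : car -> car -> car;
  pc : car -> car;
  neg : car -> car;
  bot : car;
  top : car;
  meetA : forall a b c, meet a (meet b c) = meet (meet a b) c;
  joinA : forall a b c, join a (join b c) = join (join a b) c;
  meetC : forall a b, meet a b = meet b a;
  joinC : forall a b, join a b = join b a;
  meet_join_absorb : forall a b, meet a (join a b) = a;
  join_meet_absorb : forall a b, join a (meet a b) = a;
  meet_join_distr : forall a b c, meet a (join b c) = join (meet a b) (meet a c);
  join_bot : forall a, join a bot = a;
  meet_top : forall a, meet a top = a;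
  pc_spec : forall a b, meet a b = bot <-> meet b (pc a) = b;
  negK : forall a, neg (neg a) = a;
  neg_join : forall a b, neg (join a b) = meet (neg a) (neg b);
  neg_meet : forall a b, neg (meet a b) = join (neg a) (neg b)
}.

Arguments meet {_}. Arguments join {_}. Arguments pc {_}. Arguments neg {_}.
Arguments bot {_}. Arguments top {_}.

Section PM.
Variable L : pmAlgebra.

Definition leL (a b : L) : Prop := meet a b = a.

Definition nontrivial : Prop := (bot : L) <> top.

Definition congruence (R : L -> L -> Prop) : Prop :=
  (forall a, R a a) /\ (forall a b, R a b -> R b a) /\
  (forall a b c, R a b -> R b c -> R a c) /\
  (forall a b c d, R a b -> R c d -> R (meet a c) (meet b d)) /\
  (forall a b c d, R a b -> R c d -> R (join a c) (join b d)) /\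
  (forall a b, R a b -> R (pc a) (pc b)) /\
  (forall a b, R a b -> R (neg a) (neg b)).

Definition same_rel (R S : L -> L -> Prop) : Prop := forall a b, R a b <-> S a b.

Definition regular : Prop :=
  forall R S, congruence R -> congruence S ->
  forall a, (forall b, R a b <-> S a b) -> same_rel R S.

Definition simple : Prop :=
  nontrivial /\
  forall R, congruence R ->
    same_rel R (fun a b => a = b) \/ same_rel R (fun _ _ => True).

Fixpoint iter_negpc (k : nat) (x : L) : L :=
  match k with
  | 0 => x
  | S k' => pc (neg (iter_negpc k' x))
  end.

Definition satisfies_Mn_identity (n : nat) : Prop :=
  forall x : L,
    iter_negpc n (meet x (pc (neg x))) = iter_negpc (S n) (meet x (pc (neg x))).

Definition in_Mn (n : nat) : Prop := regular /\ satisfies_Mn_identity n.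

(** * Dual pm-space: prime ideals, ordered by inclusion, with involution zeta *)
Definition prime_ideal (I : L -> Prop) : Prop :=
  I bot /\
  (forall a b, I b -> leL a b -> I a) /\
  (forall a b, I a -> I b -> I (join a b)) /\
  ~ I top /\
  (forall a b, I (meet a b) -> I a \/ I b).

Definition zeta (I : L -> Prop) : L -> Prop := fun a => ~ I (neg a).

Definition subsetP (I J : L -> Prop) : Prop := forall a, I a -> J a.
Definition sameP (I J : L -> Prop) : Prop := forall a, I a <-> J a.
Definition comparableP (I J : L -> Prop) : Prop := subsetP I J \/ subsetP J I.

Fixpoint walk (k : nat) (I J : L -> Prop) : Prop :=
  match k with
  | 0 => sameP I J
  | S k' => exists K, prime_ideal K /\ walk k' I K /\ comparableP K J
  end.

(** ell(I,J) <= n, where ell is the graph distance (infinite if no path) *)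
Definition ell_le (I J : L -> Prop) (n : nat) : Prop :=
  exists k, k <= n /\ walk k I J.

End PM.

(* Main.v *)
Require Import Defs.
From Stdlib Require Import Arith Classical FunctionalExtensionality PropExtensionality Lia.
From mathcomp Require classical_sets.


Lemma meet_idem {L : pmAlgebra} (a : L) : meet a a = a.
Proof.
  rewrite <- (join_meet_absorb L a a) at 2. rewrite meet_join_absorb. reflexivity.
Qed.

Lemma join_idem {L : pmAlgebra} (a : L) : join a a = a.
Proof.
  rewrite <- (meet_join_absorb L a a) at 2. rewrite join_meet_absorb. reflexivity.
Qed.

Lemma meet_bot {L : pmAlgebra} (a : L) : meet a bot = bot.
Proof.
  rewrite meetC. rewrite <- (join_bot L a) at 1. rewrite joinC.
  apply meet_join_absorb.
Qed.

Lemma join_top {L : pmAlgebra} (a : L) : join a top = top.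
Proof.
  rewrite joinC. rewrite <- (meet_top L a) at 1. rewrite meetC.
  apply join_meet_absorb.
Qed.

Lemma join_meet_le {L : pmAlgebra} (x y : L) : join x y = x -> meet y x = y.
Proof. intro H. rewrite <- H. rewrite joinC. apply meet_join_absorb. Qed.

Lemma le_join {L : pmAlgebra} (x y : L) : meet x y = x -> join x y = y.
Proof. intro H. rewrite <- H. rewrite joinC, meetC. apply join_meet_absorb. Qed.

Lemma le_meet_l {L : pmAlgebra} (a b : L) : leL L (meet a b) a.
Proof. unfold leL. rewrite (meetC L (meet a b) a), meetA, meet_idem. reflexivity. Qed.

Lemma le_meet_r {L : pmAlgebra} (a b : L) : leL L (meet a b) b.
Proof. unfold leL. rewrite <- meetA, meet_idem. reflexivity. Qed.

Lemma le_join_l {L : pmAlgebra} (a b : L) : leL L a (join a b).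
Proof. unfold leL. apply meet_join_absorb. Qed.

Lemma le_join_r {L : pmAlgebra} (a b : L) : leL L b (join a b).
Proof. unfold leL. rewrite joinC. apply meet_join_absorb. Qed.

Lemma le_trans {L : pmAlgebra} (a b c : L) : leL L a b -> leL L b c -> leL L a c.
Proof. unfold leL. intros H1 H2. rewrite <- H1, <- meetA, H2. reflexivity. Qed.

Lemma le_antisym {L : pmAlgebra} (a b : L) : leL L a b -> leL L b a -> a = b.
Proof. unfold leL. intros H1 H2. rewrite <- H1. rewrite meetC. exact H2. Qed.

Lemma le_refl {L : pmAlgebra} (a : L) : leL L a a.
Proof. apply meet_idem. Qed.

Lemma le_bot {L : pmAlgebra} (a : L) : leL L bot a.
Proof. unfold leL. rewrite meetC. apply meet_bot. Qed.

Lemma le_top {L : pmAlgebra} (a : L) : leL L a top.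
Proof. apply meet_top. Qed.

Lemma le_meet {L : pmAlgebra} (a b c : L) : leL L a b -> leL L a c -> leL L a (meet b c).
Proof. unfold leL. intros H1 H2. rewrite meetA, H1. exact H2. Qed.

Lemma le_join_lub {L : pmAlgebra} (a b c : L) : leL L a c -> leL L b c -> leL L (join a b) c.
Proof. unfold leL. intros H1 H2. rewrite meetC, meet_join_distr, (meetC L c a), (meetC L c b), H1, H2. reflexivity. Qed.

Lemma meet_mono {L : pmAlgebra} (a b c d : L) : leL L a b -> leL L c d -> leL L (meet a c) (meet b d).
Proof. intros. apply le_meet. eapply le_trans. apply le_meet_l. auto.
 eapply le_trans. apply le_meet_r. auto. Qed.

Lemma join_mono {L : pmAlgebra} (a b c d : L) : leL L a b -> leL L c d -> leL L (join a c) (join b d).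
Proof. intros. apply le_join_lub. eapply le_trans. eauto. apply le_join_l.
 eapply le_trans. eauto. apply le_join_r. Qed.

Lemma neg_anti {L : pmAlgebra} (a b : L) : leL L a b -> leL L (neg b) (neg a).
Proof. unfold leL. intro H. apply join_meet_le.
  rewrite <- neg_meet. rewrite H. reflexivity. Qed.

Lemma neg_bot {L : pmAlgebra} : neg (bot : L) = top.
Proof. apply le_antisym. apply le_top.
  rewrite <- (negK L top). apply neg_anti. apply le_bot. Qed.

Lemma neg_top {L : pmAlgebra} : neg (top : L) = bot.
Proof. rewrite <- (negK L bot), neg_bot. reflexivity. Qed.

Lemma pc_meet {L : pmAlgebra} (a : L) : meet a (pc a) = bot.
Proof. apply (proj2 (pc_spec L a (pc a))). apply meet_idem. Qed.

Lemma pc_bot {L : pmAlgebra} : pc (bot : L) = top.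
Proof. assert (H := proj1 (pc_spec L bot top) (meet_top L bot)).
  rewrite meetC, meet_top in H. exact H. Qed.

Lemma pc_top_eq {L : pmAlgebra} (b : L) : pc b = top -> b = bot.
Proof. intro H. rewrite <- (meet_top L b), <- H. apply pc_meet. Qed.

Definition is_ideal {L : pmAlgebra} (I : L -> Prop) :=
  I bot /\ (forall a b, I b -> leL L a b -> I a) /\ (forall a b, I a -> I b -> I (join a b)).
Definition is_filter {L : pmAlgebra} (F : L -> Prop) :=
  F top /\ (forall a b, F a -> leL L a b -> F b) /\ (forall a b, F a -> F b -> F (meet a b)).

Lemma dist_bound {L : pmAlgebra} (k1 k2 a b : L) :
  leL L (meet (join k1 a) (join k2 b)) (join (join k1 k2) (meet a b)).
Proof.
  rewrite meet_join_distr. apply le_join_lub.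
  - eapply le_trans. apply le_meet_r. eapply le_trans. apply (le_join_r k1 k2). apply le_join_l.
  - rewrite meetC, meet_join_distr. apply le_join_lub.
    + eapply le_trans. apply le_meet_r. eapply le_trans. apply (le_join_l k1 k2). apply le_join_l.
    + rewrite meetC. apply le_join_r.
Qed.

Lemma join_bound {L : pmAlgebra} (k1 k2 a : L) :
  leL L (join (join k1 a) (join k2 a)) (join (join k1 k2) a).
Proof.
  apply le_join_lub; apply le_join_lub.
  - eapply le_trans. apply (le_join_l k1 k2). apply le_join_l.
  - apply le_join_r.
  - eapply le_trans. apply (le_join_r k1 k2). apply le_join_l.
  - apply le_join_r.
Qed.

Theorem PIT {L : pmAlgebra} (I0 F : L -> Prop) :
  is_ideal I0 -> is_filter F -> (forall a, I0 a -> F a -> False) ->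
  exists K, prime_ideal L K /\ (forall a, I0 a -> K a) /\ (forall a, K a -> F a -> False).
Proof.
  intros HI HF Hdis.
  set (P := fun A : L -> Prop => is_ideal (fun x => A x \/ I0 x) /\
             (forall a, (A a \/ I0 a) -> F a -> False)).
  destruct (@classical_sets.Zorn_bigcup (car L) P) as [A [PA Amax]].
  { intros Fam Hsub Htot. unfold P. simpl.
    destruct HI as [HI0 [HI1 HI2]].
    split; [split; [|split]|].
    - right. exact HI0.
    - intros a b [[X HX Xb]|Ib] Hab.
      + destruct (Hsub X HX) as [[_ [HX1 _]] _].
        destruct (HX1 a b (or_introl Xb) Hab) as [Xa|Ia].
        * left. exists X; auto.
        * right; auto.
      + right. eauto.
    - intros a b [[X HX Xa]|Ia] [[Y HY Yb]|Ib].
      + destruct (Htot X Y HX HY) as [S|S].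
        * destruct (Hsub Y HY) as [[_ [_ HY2]] _].
          destruct (HY2 a b (or_introl (S a Xa)) (or_introl Yb)); [left; exists Y; auto|right; auto].
        * destruct (Hsub X HX) as [[_ [_ HX2]] _].
          destruct (HX2 a b (or_introl Xa) (or_introl (S b Yb))); [left; exists X; auto|right; auto].
      + destruct (Hsub X HX) as [[_ [_ HX2]] _].
        destruct (HX2 a b (or_introl Xa) (or_intror Ib)); [left; exists X; auto|right; auto].
      + destruct (Hsub Y HY) as [[_ [_ HY2]] _].
        destruct (HY2 a b (or_intror Ia) (or_introl Yb)); [left; exists Y; auto|right; auto].
      + right; auto.
    - intros a [[X HX Xa]|Ia] Fa.
      + destruct (Hsub X HX) as [_ D]. eauto.
      + eauto. }
  set (K := fun x => A x \/ I0 x).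
  destruct PA as [[K0 [K1 K2]] KD].
  fold K in K0, K1, K2, KD.
  exists K. split; [|split].
  - split; [exact K0|split; [exact K1|split; [exact K2|split]]].
    + intro Kt. apply (KD top Kt). apply HF.
    + intros a b Kab. apply NNPP. intro Hn. apply not_or_and in Hn. destruct Hn as [Na Nb].
      assert (Hext : forall c, ~ K c -> exists f k, F f /\ K k /\ leL L f (join k c)).
      { intros c Nc. set (Kc := fun e => exists k, K k /\ leL L e (join k c)).
        assert (IKc : is_ideal Kc).
        { split; [|split].
          - exists bot. split; auto. apply le_bot.
          - intros x y [k [Kk Hk]] Hxy. exists k. split; auto. eapply le_trans; eauto.
          - intros x y [k1 [Kk1 H1]] [k2 [Kk2 H2]]. exists (join k1 k2). split. apply K2; auto.
            eapply le_trans. apply join_mono; eauto. apply join_bound. }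
        assert (KKc : forall x, K x -> Kc x).
        { intros x Kx. exists x. split; auto. apply le_join_l. }
        apply NNPP. intro Hno.
        apply (Amax Kc).
        - split.
          + intros x Ax. apply KKc. left; auto.
          + intro S. apply Nc. left. apply S. exists bot. split. auto. apply le_join_r.
        - split.
          + destruct IKc as [J0 [J1 J2]]. split; [|split].
            * left; auto.
            * intros x y [Ky|Iy] Hxy; left; [eauto|]. apply (J1 x y); auto. apply KKc. right; auto.
            * intros x y Hx Hy. left. destruct Hx as [Hx|Hx]; destruct Hy as [Hy|Hy];
                apply J2; auto; apply KKc; right; auto.
          + intros x [Kx|Ix] Fx.
            * apply Hno. destruct Kx as [k [Kk Hk]]. exists x, k. auto.
            * eapply Hdis; eauto. }
      destruct (Hext a Na) as [f1 [k1 [F1 [Kk1 H1]]]].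
      destruct (Hext b Nb) as [f2 [k2 [F2 [Kk2 H2]]]].
      apply (KD (meet f1 f2)).
      * apply (K1 _ (join (join k1 k2) (meet a b))).
        -- apply K2; auto.
        -- eapply le_trans. apply meet_mono; eauto. apply dist_bound.
      * destruct HF as [_ [_ HF2]]. auto.
  - intros a Ia. right; auto.
  - exact KD.
Qed.

Lemma pred_ext {L : pmAlgebra} (I J : L -> Prop) : (forall x, I x <-> J x) -> I = J.
Proof. intro H. apply functional_extensionality. intro x. apply propositional_extensionality. auto. Qed.


Lemma pr_down {L : pmAlgebra} (K : L -> Prop) a b : prime_ideal L K -> K b -> leL L a b -> K a.
Proof. intros [_ [H _]] Kb Hab. eauto. Qed.

Lemma pr_bot {L : pmAlgebra} (K : L -> Prop) : prime_ideal L K -> K bot.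
Proof. intros [H _]. exact H. Qed.

Lemma pr_top {L : pmAlgebra} (K : L -> Prop) : prime_ideal L K -> ~ K top.
Proof. intros [_ [_ [_ [H _]]]]. exact H. Qed.

Lemma pr_meet {L : pmAlgebra} (K : L -> Prop) a b : prime_ideal L K -> (K (meet a b) <-> K a \/ K b).
Proof. intros HK. split.
  - destruct HK as [_ [_ [_ [_ H]]]]. apply H.
  - intros [Ka|Kb]. eapply pr_down; eauto. apply le_meet_l. eapply pr_down; eauto. apply le_meet_r.
Qed.

Lemma pr_join {L : pmAlgebra} (K : L -> Prop) a b : prime_ideal L K -> (K (join a b) <-> K a /\ K b).
Proof. intros HK. split.
  - intro H. split; eapply pr_down; eauto. apply le_join_l. apply le_join_r.
  - destruct HK as [_ [_ [H _]]]. intros [? ?]; auto.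
Qed.

Lemma separation {L : pmAlgebra} (a b : L) :
  (forall K, prime_ideal L K -> K b -> K a) -> leL L a b.
Proof.
  intro H. apply NNPP. intro Hn.
  destruct (PIT (fun x => leL L x b) (fun x => leL L a x)) as [K [HK [H1 H2]]].
  - split; [apply le_bot|split].
    + intros x y Hy Hxy. eapply le_trans; eauto.
    + intros x y Hx Hy. apply le_join_lub; auto.
  - split; [apply le_top|split].
    + intros x y Hx Hxy. eapply le_trans; eauto.
    + intros x y Hx Hy. apply le_meet; auto.
  - intros x Hx Hx'. apply Hn. eapply le_trans; eauto.
  - apply (H2 a). apply H; auto. apply H1. apply le_refl. apply le_refl.
Qed.

Lemma elem_eq {L : pmAlgebra} (a b : L) :
  (forall K, prime_ideal L K -> (K a <-> K b)) -> a = b.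
Proof.
  intro H. apply le_antisym; apply separation; intros K HK Hx; apply (H K HK); exact Hx.
Qed.

Lemma exists_prime_with {L : pmAlgebra} (y : L) : y <> top -> exists K, prime_ideal L K /\ K y.
Proof.
  intro Hy. assert (~ leL L top y).
  { intro H. apply Hy. apply le_antisym. apply le_top. auto. }
  apply NNPP. intro Hn. apply H. apply separation. intros K HK Ky. exfalso. apply Hn. eauto.
Qed.

Lemma exists_prime_without {L : pmAlgebra} (y : L) : y <> bot -> exists K, prime_ideal L K /\ ~ K y.
Proof.
  intro Hy. assert (~ leL L y bot).
  { intro H. apply Hy. apply le_antisym. auto. apply le_bot. }
  apply NNPP. intro Hn. apply H. apply separation. intros K HK Ky. apply NNPP. intro. apply Hn. eauto.
Qed.

Lemma zeta_prime {L : pmAlgebra} (K : L -> Prop) : prime_ideal L K -> prime_ideal L (zeta L K).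
Proof.
  intro HK. unfold zeta. split; [|split; [|split; [|split]]].
  - rewrite neg_bot. apply pr_top; auto.
  - intros a b Hb Hab Ha. apply Hb. eapply pr_down; eauto. apply neg_anti. auto.
  - intros a b Ha Hb H. rewrite neg_join in H. apply pr_meet in H; auto. tauto.
  - intro H. apply H. rewrite neg_top. apply pr_bot; auto.
  - intros a b H. rewrite neg_meet in H. apply NNPP. intro Hn.
    apply H. apply pr_join; auto. split; apply NNPP; intro; apply Hn; auto.
Qed.

Lemma zetaK {L : pmAlgebra} (K : L -> Prop) : zeta L (zeta L K) = K.
Proof. apply pred_ext. intro x. unfold zeta. rewrite negK. split; [apply NNPP| auto]. Qed.

Lemma zeta_anti {L : pmAlgebra} (I J : L -> Prop) : subsetP L I J -> subsetP L (zeta L J) (zeta L I).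
Proof. unfold subsetP, zeta. intros H a Ha HI. apply Ha. auto. Qed.

Lemma zeta_neg {L : pmAlgebra} (K : L -> Prop) b : zeta L K b <-> ~ K (neg b).
Proof. unfold zeta. tauto. Qed.

Lemma star {L : pmAlgebra} (K : L -> Prop) (a : L) : prime_ideal L K ->
  (~ K (pc a) <-> forall K', prime_ideal L K' -> subsetP L K' K -> K' a).
Proof.
  intro HK. split.
  - intros H K' HK' Sub. assert (K' (meet a (pc a))). { rewrite pc_meet. apply pr_bot; auto. }
    apply pr_meet in H0; auto. destruct H0; auto. exfalso. apply H. auto.
  - intros H Hpc.
    destruct (PIT (fun x => x = bot) (fun e => exists c, ~ K c /\ leL L (meet c a) e)) as [K' [HK' [H1 H2]]].
    + split; auto. split.
      * intros x y -> Hxy. apply le_antisym; auto. apply le_bot.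
      * intros x y -> ->. apply join_bot.
    + split; [|split].
      * exists top. split. apply pr_top; auto. apply le_top.
      * intros x y [c [Kc Hc]] Hxy. exists c. split; auto. eapply le_trans; eauto.
      * intros x y [c1 [K1 Hc1]] [c2 [K2 Hc2]]. exists (meet c1 c2). split.
        -- rewrite pr_meet; tauto.
        -- apply le_meet. eapply le_trans; [|apply Hc1]. apply meet_mono. apply le_meet_l. apply le_refl.
           eapply le_trans; [|apply Hc2]. apply meet_mono. apply le_meet_r. apply le_refl.
    + intros x -> [c [Kc Hc]]. apply Kc. eapply pr_down; eauto.
      assert (meet c a = bot). { apply le_antisym; auto. apply le_bot. }
      apply (proj1 (pc_spec L a c)). rewrite meetC. auto.
    + apply (H2 a). apply H; auto.
      * intros x K'x. apply NNPP. intro Kx. apply (H2 x); auto. exists x. split; auto. apply le_meet_l.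
      * exists top. split. apply pr_top; auto. rewrite meetC, meet_top. apply le_refl.
Qed.

Lemma box {L : pmAlgebra} (K : L -> Prop) (b : L) : prime_ideal L K ->
  (~ K (pc (neg b)) <-> forall J, prime_ideal L J -> subsetP L (zeta L K) J -> ~ J b).
Proof.
  intro HK. rewrite star; auto. split.
  - intros H J HJ Sub Jb. assert (zeta L J (neg b)).
    2:{ unfold zeta in H0. rewrite negK in H0. auto. }
    apply (H (zeta L J)). apply zeta_prime; auto.
    rewrite <- (zetaK K). apply zeta_anti. auto.
    idtac.
  - intros H K' HK' Sub. apply NNPP. intro Hn.
    apply (H (zeta L K')). apply zeta_prime; auto. apply zeta_anti; auto.
    rewrite zeta_neg. auto.
Qed.

Fixpoint Rk {L : pmAlgebra} (k : nat) (I J : L -> Prop) : Prop :=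
  match k with
  | 0 => I = J
  | S k' => exists K, prime_ideal L K /\ subsetP L (zeta L I) K /\ Rk k' K J
  end.

Fixpoint zz {L : pmAlgebra} (m : nat) (I : L -> Prop) : L -> Prop :=
  match m with 0 => I | S m' => zeta L (zz m' I) end.

Lemma Rk_prime {L : pmAlgebra} k (I J : L -> Prop) : prime_ideal L I -> Rk k I J -> prime_ideal L J.
Proof.
  revert I. induction k; simpl; intros I HI H.
  - subst; auto.
  - destruct H as [K [HK [_ H]]]. eauto.
Qed.

Lemma T_lemma {L : pmAlgebra} k (K : L -> Prop) (a : L) : prime_ideal L K ->
  (~ K (iter_negpc L k a) <-> forall Y, prime_ideal L Y -> Rk k K Y -> ~ Y a).
Proof.
  revert K. induction k; simpl; intros K HK.
  - split. intros H Y _ <-. auto. intros H. apply H; auto.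
  - rewrite box; auto. split.
    + intros H Y HY [J [HJ [Sub HR]]]. revert Y HY HR. apply IHk; auto.
    + intros H J HJ Sub. apply IHk; auto. intros Y HY HR. apply H; auto. exists J; auto.
Qed.

Lemma Rk_back {L : pmAlgebra} m (I Y : L -> Prop) : prime_ideal L I -> prime_ideal L Y ->
  (Rk (S m) I Y <-> exists K, prime_ideal L K /\ Rk m I K /\ subsetP L (zeta L K) Y).
Proof.
  revert I. induction m; intros I HI HY.
  - simpl. split.
    + intros [K [HK [Sub <-]]]. exists I. split; [auto|split; [reflexivity|auto]].
    + intros [K [HK [<- Sub]]]. exists Y. split; [auto|split; [auto|reflexivity]].
  - split.
    + intros [K' [HK' [Sub HR]]]. apply IHm in HR; auto.
      destruct HR as [K [HK [HR Sub2]]]. exists K. split; auto. split; auto. exists K'. auto.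
    + intros [K [HK [[K' [HK' [Sub HR]]] Sub2]]]. exists K'. split; auto. split; auto.
      apply IHm; auto. exists K; auto.
Qed.

Lemma Rk_up {L : pmAlgebra} m (I Y Y' : L -> Prop) : prime_ideal L I -> Rk (S m) I Y ->
  prime_ideal L Y' -> subsetP L Y Y' -> Rk (S m) I Y'.
Proof.
  intros HI HR HY' Sub. assert (HY : prime_ideal L Y) by exact (Rk_prime (S m) I Y HI HR).
  apply Rk_back in HR; auto. apply Rk_back; auto.
  destruct HR as [K [HK [HR S2]]]. exists K. split; auto. split; auto.
  intros x Hx. apply Sub. auto.
Qed.

Lemma Rk_szeta {L : pmAlgebra} m (I Y : L -> Prop) : prime_ideal L I -> Rk m I Y -> Rk (S m) I (zeta L Y).
Proof.
  intros HI HR. assert (HY : prime_ideal L Y) by exact (Rk_prime m I Y HI HR).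
  apply Rk_back; auto. apply zeta_prime; auto. exists Y. split; auto. split; auto. intros x Hx; auto.
Qed.

Lemma Rk_pad {L : pmAlgebra} m (I Y : L -> Prop) : prime_ideal L I -> Rk m I Y -> Rk (S (S m)) I Y.
Proof.
  intros HI HR. rewrite <- (zetaK Y). apply Rk_szeta; auto. apply Rk_szeta; auto.
Qed.

Lemma zz_prime {L : pmAlgebra} m (Y : L -> Prop) : prime_ideal L Y -> prime_ideal L (zz m Y).
Proof. induction m; simpl; auto. intro. apply zeta_prime; auto. Qed.

Lemma zz_cases {L : pmAlgebra} m (Y : L -> Prop) : zz m Y = Y \/ zz m Y = zeta L Y.
Proof. induction m; simpl; auto. destruct IHm as [-> | ->]; auto. rewrite zetaK. auto. Qed.

Lemma zz_zz {L : pmAlgebra} m (Y : L -> Prop) : zz m (zz m Y) = Y.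
Proof. induction m; simpl; auto.
  assert (forall Z, zz m (zeta L Z) = zeta L (zz m Z)).
  { clear. induction m; simpl; auto. intro Z. rewrite IHm. auto. }
  rewrite H, zetaK. auto. Qed.

Lemma zz_zeta {L : pmAlgebra} m (Z : L -> Prop) : zz m (zeta L Z) = zeta L (zz m Z).
Proof. induction m; simpl; auto. rewrite IHm. auto. Qed.

Lemma Rk_zz_self {L : pmAlgebra} m (I : L -> Prop) : prime_ideal L I -> Rk m I (zz m I).
Proof. intros HI. induction m; simpl; auto. apply Rk_szeta; auto. Qed.

Lemma comp_sym {L : pmAlgebra} (A B : L -> Prop) : comparableP L A B -> comparableP L B A.
Proof. unfold comparableP. tauto. Qed.

Lemma comp_zeta {L : pmAlgebra} (A B : L -> Prop) : comparableP L A B -> comparableP L (zeta L A) (zeta L B).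
Proof. intros [H|H]; [right|left]; apply zeta_anti; auto. Qed.

Lemma zz_comp {L : pmAlgebra} m (A B : L -> Prop) : comparableP L A B -> comparableP L (zz m A) (zz m B).
Proof. induction m; simpl; auto. intro. apply comp_zeta; auto. Qed.

Lemma walk_base {L : pmAlgebra} (I J : L -> Prop) : walk L 0 I J -> I = J.
Proof. simpl. apply pred_ext. Qed.

Lemma walk_refl {L : pmAlgebra} (I : L -> Prop) : walk L 0 I I.
Proof. simpl. intro; tauto. Qed.

Lemma walk_zeta {L : pmAlgebra} k (I J : L -> Prop) : walk L k I J -> walk L k (zeta L I) (zeta L J).
Proof.
  revert J. induction k; intros J H.
  - apply walk_base in H. subst. apply walk_refl.
  - destruct H as [K [HK [HW Hc]]]. exists (zeta L K). split. apply zeta_prime; auto.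
    split; auto. apply comp_zeta; auto.
Qed.

Lemma walk_prepend {L : pmAlgebra} k (A0 A B : L -> Prop) : prime_ideal L A0 -> comparableP L A0 A ->
  walk L k A B -> walk L (S k) A0 B.
Proof.
  intros H0 Hc. revert B. induction k; intros B H.
  - apply walk_base in H. subst. exists A0. split; auto. split; auto. apply walk_refl.
  - destruct H as [K [HK [HW Hc2]]]. exists K. split; auto.
Qed.

Lemma Lwalk {L : pmAlgebra} k (I Y : L -> Prop) : prime_ideal L I -> walk L k I Y ->
  prime_ideal L Y -> forall m, k < m -> Rk m I (zz m Y).
Proof.
  intros HI. revert Y. induction k; intros Y HW HY m Hm.
  - apply walk_base in HW. subst. apply Rk_zz_self; auto.
  - destruct HW as [K [HK [HW Hc]]]. destruct m as [|m']; [lia|].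
    assert (IH := IHk K HW HK m' ltac:(lia)).
    assert (Hc' := zz_comp m' K Y Hc). simpl.
    destruct Hc' as [Sub|Sub].
    + apply Rk_szeta; auto. destruct m' as [|m'']; [lia|].
      eapply Rk_up; eauto. apply zz_prime; auto.
    + apply Rk_back; auto. apply zeta_prime, zz_prime; auto.
      exists (zz m' K). split. apply zz_prime; auto. split; auto. apply zeta_anti; auto.
Qed.

Lemma Rk_walk {L : pmAlgebra} m (K Y : L -> Prop) : prime_ideal L K -> Rk m K Y -> walk L m K (zz m Y).
Proof.
  revert K. induction m; intros K HK HR.
  - simpl in HR. subst. apply walk_refl.
  - destruct HR as [K' [HK' [Sub HR]]]. apply IHm in HR; auto.
    apply walk_zeta in HR. simpl. eapply walk_prepend; [exact HK| |exact HR].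
    right. rewrite <- (zetaK K). apply zeta_anti. auto.
Qed.

Definition vv {L : pmAlgebra} (x : L) := meet x (pc (neg x)).

Lemma Vchar {L : pmAlgebra} m (K : L -> Prop) (x : L) : prime_ideal L K ->
  (~ K (iter_negpc L m (vv x)) <->
   forall Y, prime_ideal L Y -> (Rk m K Y \/ Rk (S m) K Y) -> ~ Y x).
Proof.
  intro HK. rewrite T_lemma; auto. unfold vv. split.
  - intros H Y HY [HR|HR].
    + intro Yx. apply (H Y HY HR). apply pr_meet; auto.
    + apply Rk_back in HR; auto. destruct HR as [Y0 [HY0 [HR Sub]]].
      assert (H1 := H Y0 HY0 HR). rewrite pr_meet in H1; auto.
      assert (H2 : ~ Y0 (pc (neg x))) by tauto.
      rewrite box in H2; auto.
  - intros H Y HY HR Hm. rewrite pr_meet in Hm; auto. destruct Hm as [Hm|Hm].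
    + apply (H Y HY (or_introl HR)). auto.
    + revert Hm. apply box; auto. intros J HJ Sub. apply H; auto. right.
      apply Rk_back; auto. exists Y. auto.
Qed.

Definition CondC (L : pmAlgebra) (n : nat) : Prop :=
  forall I J : L -> Prop, prime_ideal L I -> prime_ideal L J ->
      ell_le L I J n \/ ell_le L I (zeta L J) n.

Lemma W_cases {L : pmAlgebra} m (X Y0 : L -> Prop) : Y0 = X \/ Y0 = zeta L X ->
  zz m Y0 = X \/ zz m Y0 = zeta L X.
Proof.
  intros [-> | ->]; destruct (zz_cases m X) as [E|E]; try rewrite zz_zeta; rewrite E; auto.
  rewrite zetaK. auto.
Qed.

Lemma cover_a {L : pmAlgebra} n : CondC L n -> forall K X : L -> Prop, prime_ideal L K -> prime_ideal L X ->
  (exists Z, prime_ideal L Z /\ subsetP L X Z /\ (Rk n K Z \/ Rk (S n) K Z)) /\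
  (Rk (S n) K X \/ Rk (S (S n)) K X).
Proof.
  intros HC K X HK HX.
  assert (exists Y0, (Y0 = X \/ Y0 = zeta L X) /\ ell_le L K Y0 n) as [Y0 [HY0 [k [Hk HW]]]].
  { destruct (HC K X HK HX) as [H|H]; eauto. }
  assert (PY0 : prime_ideal L Y0) by (destruct HY0 as [->| ->]; auto; apply zeta_prime; auto).
  assert (R1 := Lwalk k K Y0 HK HW PY0 (S n) ltac:(lia)).
  assert (R2 := Lwalk k K Y0 HK HW PY0 (S (S n)) ltac:(lia)).
  destruct (W_cases (S n) X Y0 HY0) as [E|E].
  - rewrite E in R1. split; auto. exists X. split; auto. split; auto. intros a; auto.
  - rewrite E in R1. simpl in R2. simpl in E. rewrite E, zetaK in R2. split; auto.
    apply Rk_back in R1; auto. 2:{ apply zeta_prime; auto. }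
    destruct R1 as [K0 [HK0 [HR Sub]]]. exists K0. split; auto. split; auto.
    rewrite <- (zetaK X), <- (zetaK K0). apply zeta_anti. auto.
Qed.

Lemma identity_from_C {L : pmAlgebra} n : CondC L n -> satisfies_Mn_identity L n.
Proof.
  intros HC x. fold (vv x). apply elem_eq. intros K HK.
  assert (~ K (iter_negpc L n (vv x)) <-> ~ K (iter_negpc L (S n) (vv x))).
  { rewrite !Vchar; auto. split.
    - intros H Y HY [HR|HR].
      + apply H; auto.
      + destruct (proj1 (cover_a n HC K Y HK HY)) as [Z [HZ [Sub HZR]]].
        intro Yx. apply (H Z HZ HZR). apply Sub. auto.
    - intros H Y HY [HR|HR].
      + apply H; auto. right. apply Rk_pad; auto.
      + apply H; auto. }
  split; intro H1; apply NNPP; intro H2; apply H in H2 || apply (proj2 H) in H2; tauto.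
Qed.

Lemma t_char {L : pmAlgebra} n : CondC L n -> forall (K : L -> Prop) (y : L), prime_ideal L K ->
  (~ K (iter_negpc L (S n) (vv y)) <-> forall Y, prime_ideal L Y -> ~ Y y).
Proof.
  intros HC K y HK. rewrite Vchar; auto. split.
  - intros H Y HY. apply H; auto. apply (proj2 (cover_a n HC K Y HK HY)).
  - intros H Y HY _. auto.
Qed.

Lemma cong_iter {L : pmAlgebra} (R : L -> L -> Prop) k a b : congruence L R -> R a b ->
  R (iter_negpc L k a) (iter_negpc L k b).
Proof.
  intros HR Hab. induction k; simpl; auto.
  destruct HR as [_ [_ [_ [_ [_ [Hpc Hneg]]]]]]. auto.
Qed.

Lemma simple_from_C {L : pmAlgebra} n : nontrivial L -> regular L -> CondC L n -> simple L.
Proof.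
  intros Hnt Hreg HC. split; auto. intros R HR.
  destruct (classic (same_rel L R (fun a b => a = b))) as [E|NE]; [left; auto|right].
  assert (Heq : congruence L (fun a b : L => a = b)).
  { repeat split; intros; subst; auto. }
  assert (exists b, R top b /\ b <> top) as [b [Rb Nb]].
  { apply NNPP. intro Hn. apply NE. apply (Hreg R _ HR Heq top). intro b. split.
    - intro Rb. apply NNPP. intro Nb. apply Hn. exists b. split; auto.
    - intros <-. destruct HR as [Hr _]. auto. }
  assert (Ht : iter_negpc L (S n) (vv (top : L)) = top).
  { apply elem_eq. intros K HK. split; intro H.
    - exfalso. revert H. apply (t_char n HC K top HK). intros Y HY. apply pr_top; auto.
    - exfalso. apply (pr_top K HK H). }
  assert (Hb : iter_negpc L (S n) (vv b) = bot).
  { apply elem_eq. intros K HK. split; intro H.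
    - apply pr_bot; auto.
    - apply NNPP. intro H2. pose proof (proj1 (t_char n HC K b HK) H2) as H3.
      destruct (exists_prime_with b Nb) as [Y [HY Yb]]. apply (H3 Y HY Yb). }
  assert (Rtb : R top bot).
  { rewrite <- Ht, <- Hb. apply cong_iter; auto. unfold vv.
    destruct HR as [Hr [_ [_ [Hm [_ [Hpc Hneg]]]]]]. auto. }
  destruct HR as [Hr [Hs [Htr [Hm _]]]].
  assert (Hz : forall a, R a bot).
  { intro a. rewrite <- (meet_top L a) at 1. rewrite <- (meet_bot a). apply Hm; auto. }
  intros a c. split; auto. intros _. eapply Htr. apply Hz. apply Hs. apply Hz.
Qed.

Lemma neg_to_eq {L : pmAlgebra} (x y : L) :
  (forall K, prime_ideal L K -> ~ K x -> ~ K y) -> (forall K, prime_ideal L K -> ~ K y -> ~ K x) -> x = y.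
Proof.
  intros H1 H2. apply elem_eq. intros K HK. split; intro H; apply NNPP; intro Hn.
  - apply (H2 K HK Hn H).
  - apply (H1 K HK Hn H).
Qed.

Lemma sub_refl {L : pmAlgebra} (K : L -> Prop) : subsetP L K K.
Proof. intros z; auto. Qed.

Lemma sub_trans {L : pmAlgebra} (A B C : L -> Prop) : subsetP L A B -> subsetP L B C -> subsetP L A C.
Proof. unfold subsetP; auto. Qed.

Lemma pc_meet_dir {L : pmAlgebra} (a b c : L) (K : L -> Prop) : pc a = pc b -> prime_ideal L K ->
  ~ K (pc (meet a c)) -> ~ K (pc (meet b c)).
Proof.
  intros E HK. rewrite !star; auto. intros H K' HK' Sub.
  destruct (classic (K' c)) as [Kc|Nc].
  - apply pr_meet; auto.
  - apply pr_meet; auto. left.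
    assert (H0 : ~ K' (pc a)).
    { rewrite star; auto. intros K'' HK'' Sub2.
      assert (H1 : K'' (meet a c)) by (apply H; auto; eapply sub_trans; eauto).
      apply pr_meet in H1; auto. destruct H1 as [H1|H1]; auto. exfalso. apply Nc. auto. }
    rewrite E in H0. rewrite star in H0; auto. apply H0; auto. apply sub_refl.
Qed.

Lemma pc_meet_compat {L : pmAlgebra} (a b c : L) : pc a = pc b -> pc (meet a c) = pc (meet b c).
Proof.
  intro E. apply neg_to_eq; intros K HK. apply pc_meet_dir; auto. apply pc_meet_dir; auto.
Qed.

Lemma pc_join_dir {L : pmAlgebra} (a b c : L) (K : L -> Prop) : pc a = pc b -> prime_ideal L K ->
  ~ K (pc (join a c)) -> ~ K (pc (join b c)).
Proof.
  intros E HK. rewrite !star; auto. intros H.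
  assert (Ha : ~ K (pc a)).
  { rewrite star; auto. intros K' HK' Sub. apply (proj1 (pr_join K' a c HK') (H K' HK' Sub)). }
  rewrite E, star in Ha; auto.
  intros K' HK' Sub. apply pr_join; auto. split. apply Ha; auto. apply (proj2 (proj1 (pr_join K' a c HK') (H K' HK' Sub))).
Qed.

Lemma pc_join_compat {L : pmAlgebra} (a b c : L) : pc a = pc b -> pc (join a c) = pc (join b c).
Proof.
  intro E. apply neg_to_eq; intros K HK. apply pc_join_dir; auto. apply pc_join_dir; auto.
Qed.

Definition Psi {L : pmAlgebra} (a b : L) := pc a = pc b /\ pc (neg a) = pc (neg b).

Lemma Psi_cong {L : pmAlgebra} : congruence L (@Psi L).
Proof.
  unfold Psi. split; [|split; [|split; [|split; [|split; [|split]]]]].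
  - auto.
  - intros a b [H1 H2]; auto.
  - intros a b c [H1 H2] [H3 H4]. split; congruence.
  - intros a b c d [H1 H2] [H3 H4]. rewrite !neg_meet. split.
    + rewrite (pc_meet_compat a b c H1), (meetC L b c), (meetC L b d). apply pc_meet_compat; auto.
    + rewrite (pc_join_compat _ _ _ H2), (joinC L (neg b)), (joinC L (neg b)). apply pc_join_compat; auto.
  - intros a b c d [H1 H2] [H3 H4]. rewrite !neg_join. split.
    + rewrite (pc_join_compat a b c H1), (joinC L b c), (joinC L b d). apply pc_join_compat; auto.
    + rewrite (pc_meet_compat _ _ _ H2), (meetC L (neg b)), (meetC L (neg b)). apply pc_meet_compat; auto.
  - intros a b [H1 H2]. rewrite H1. auto.
  - intros a b [H1 H2]. rewrite !negK. auto.
Qed.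

Lemma Psi_eq {L : pmAlgebra} : regular L -> forall a b : L, Psi a b -> a = b.
Proof.
  intros Hreg a b H.
  assert (Heq : congruence L (fun a b : L => a = b)).
  { repeat split; intros; subst; auto. }
  apply (Hreg (@Psi L) (fun a b => a = b) Psi_cong Heq bot); auto.
  intro c. split.
  - intros [H1 _]. rewrite pc_bot in H1. symmetry. apply pc_top_eq. auto.
  - intros <-. split; auto.
Qed.

Lemma diff_elem {L : pmAlgebra} (A B : L -> Prop) : subsetP L A B -> A <> B -> exists y, B y /\ ~ A y.
Proof.
  intros S N. apply NNPP. intro Hn. apply N. apply pred_ext. intro x. split; auto.
  intro Bx. apply NNPP. intro. apply Hn. eauto.
Qed.

Lemma no3chain {L : pmAlgebra} : regular L -> forall K1 K2 K3 : L -> Prop,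
  prime_ideal L K1 -> prime_ideal L K2 -> prime_ideal L K3 ->
  subsetP L K1 K2 -> subsetP L K2 K3 -> K1 <> K2 -> K2 <> K3 -> False.
Proof.
  intros Hreg K1 K2 K3 H1 H2 H3 S12 S23 N12 N23.
  destruct (diff_elem K1 K2 S12 N12) as [y [K2y N1y]].
  destruct (diff_elem K2 K3 S23 N23) as [x [K3x N2x]].
  set (b := join y (pc y)). set (e := meet x (neg (pc (neg x)))).
  assert (Hb : forall K, prime_ideal L K -> ~ K (pc b) -> False).
  { intros K HK H. rewrite star in H; auto.
    assert (Kpy : K (pc y)) by (apply (proj2 (proj1 (pr_join K y (pc y) HK) (H K HK (sub_refl K))))).
    assert (~ forall K', prime_ideal L K' -> subsetP L K' K -> K' y).
    { rewrite <- star; auto. }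
    apply H0. intros K' HK' Sub. apply (proj1 (proj1 (pr_join K' y (pc y) HK') (H K' HK' Sub))). }
  assert (Hab : join b e = b).
  { apply Psi_eq; auto. split.
    - apply neg_to_eq; intros K HK Hn; exfalso.
      + rewrite star in Hn; auto. apply (Hb K HK). rewrite star; auto. intros K' HK' Sub.
        apply (proj1 (proj1 (pr_join K' b e HK') (Hn K' HK' Sub))).
      + apply (Hb K HK Hn).
    - rewrite neg_join. apply neg_to_eq; intros K HK Hn.
      + rewrite star in Hn |- *; auto. intros K' HK' Sub.
        destruct (classic (K' (neg b))) as [Kb|Nb]; auto. exfalso.
        assert (Hd : forall K'', prime_ideal L K'' -> subsetP L K'' K' -> K'' (neg e)).
        { intros K'' HK'' Sub2. assert (Hm := Hn K'' HK'' (sub_trans _ _ _ Sub2 Sub)).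
          apply pr_meet in Hm; auto. destruct Hm as [Hm|Hm]; auto. exfalso. apply Nb. auto. }
        unfold e in Hd. rewrite neg_meet, negK in Hd.
        assert (Hp : K' (pc (neg x))) by (apply (proj2 (proj1 (pr_join _ _ _ HK') (Hd K' HK' (sub_refl K'))))).
        assert (~ forall K'', prime_ideal L K'' -> subsetP L K'' K' -> K'' (neg x)).
        { rewrite <- star; auto. }
        apply H. intros K'' HK'' Sub2. apply (proj1 (proj1 (pr_join _ _ _ HK'') (Hd K'' HK'' Sub2))).
      + rewrite star in Hn |- *; auto. intros K' HK' Sub. apply pr_meet; auto. left. apply Hn; auto. }
  assert (Kb : K2 b).
  { apply pr_join; auto. split; auto. apply NNPP. intro Hn. rewrite star in Hn; auto.
    apply N1y. apply Hn; auto. }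
  rewrite <- Hab in Kb. apply pr_join in Kb; auto. destruct Kb as [_ Ke].
  apply pr_meet in Ke; auto. destruct Ke as [Ke|Ke]; auto.
  assert (Z : ~ zeta L K2 (pc (neg x))) by (rewrite zeta_neg; tauto).
  rewrite box in Z. 2:{ apply zeta_prime; auto. }
  apply (Z K3 H3); auto. rewrite zetaK. auto.
Qed.

Lemma T_mono {L : pmAlgebra} k (a b : L) : leL L a b -> leL L (iter_negpc L k a) (iter_negpc L k b).
Proof.
  intro Hab. apply separation. intros K HK Kb. apply NNPP. intro Na.
  rewrite T_lemma in Na; auto. revert Kb. apply T_lemma; auto.
  intros Y HY HR Yb. apply (Na Y HY HR). eapply pr_down; eauto.
Qed.

Lemma SepR {L : pmAlgebra} k : forall (I X : L -> Prop), prime_ideal L I -> prime_ideal L X ->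
  ~ (exists Y, prime_ideal L Y /\ Rk k I Y /\ subsetP L X Y) ->
  exists a, X a /\ forall Y, prime_ideal L Y -> Rk k I Y -> ~ Y a.
Proof.
  induction k; intros I X HI HX Hn.
  - assert (~ subsetP L X I) by (intro S; apply Hn; exists I; simpl; auto).
    apply NNPP. intro Hn2. apply H. intros a Xa. apply NNPP. intro Ia. apply Hn2.
    exists a. split; auto. intros Y HY HR. simpl in HR. subst. auto.
  - set (I0 := fun e => exists z a, zeta L I z /\ X a /\ leL L e (join z (iter_negpc L k a))).
    destruct (classic (I0 top)) as [Ht|Nt].
    + destruct Ht as [z [a0 [Iz [Xa Hle]]]]. exists a0. split; auto.
      intros Y HY [K [HK [Sub HR]]]. revert Y HY HR. apply T_lemma; auto. intro KT.
      apply (pr_top K HK). apply (pr_down K top (join z (iter_negpc L k a0)) HK); [apply pr_join; auto|exact Hle].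
    + assert (HZ := zeta_prime I HI).
      destruct (PIT I0 (fun e => e = top)) as [K [HK [H1 H2]]].
      * split; [|split].
        -- exists bot, bot. split. apply pr_bot; auto. split. apply pr_bot; auto. apply le_bot.
        -- intros x y [z [a [Iz [Xa Hle]]]] Hxy. exists z, a. split; auto. split; auto. eapply le_trans; eauto.
        -- intros x y [z1 [a1 [Iz1 [Xa1 H1]]]] [z2 [a2 [Iz2 [Xa2 H2]]]].
           exists (join z1 z2), (join a1 a2). split. apply pr_join; auto.
           split. apply pr_join; auto. eapply le_trans. apply join_mono; eauto.
           apply le_join_lub; apply le_join_lub.
           ++ eapply le_trans; [|apply le_join_l]. apply le_join_l.
           ++ eapply le_trans; [|apply le_join_r]. apply T_mono. apply le_join_l.
           ++ eapply le_trans; [|apply le_join_l]. apply le_join_r.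
           ++ eapply le_trans; [|apply le_join_r]. apply T_mono. apply le_join_r.
      * split; auto. split.
        -- intros x y -> Hxy. apply le_antisym; auto. apply le_top.
        -- intros x y -> ->. apply meet_top.
      * intros x Ix ->. auto.
      * assert (Sub : subsetP L (zeta L I) K).
        { intros z Iz. apply H1. exists z, bot. split; auto. split. apply pr_bot; auto. apply le_join_l. }
        destruct (IHk K X HK HX) as [a [Xa Ha]].
        { intros [Y [HY [HR S]]]. apply Hn. exists Y. split; auto. split; auto. exists K. auto. }
        rewrite <- T_lemma in Ha; auto. exfalso. apply Ha. apply H1. exists bot, a. split. apply pr_bot; auto.
        split; auto. apply le_join_r.
Qed.

Lemma B_core {L : pmAlgebra} n : satisfies_Mn_identity L n -> simple L ->
  forall I J : L -> Prop, prime_ideal L I -> prime_ideal L J ->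
  (forall K, prime_ideal L K -> subsetP L K I -> K = I) ->
  (forall K, prime_ideal L K -> subsetP L J K -> K = J) ->
  ~ ell_le L I J n -> ~ ell_le L I (zeta L J) n -> False.
Proof.
  intros Hid Hs I J HI HJ Hmin Hmax N1 N2.
  assert (Hsep : forall m, m <= S n -> ~ (exists Y, prime_ideal L Y /\ Rk m I Y /\ subsetP L J Y)).
  { intros m Hm [Y [HY [HR SJ]]]. assert (EY : Y = J) by (apply Hmax; auto). subst Y.
    destruct m as [|m'].
    - simpl in HR. subst. apply N1. exists 0. split; [lia|]. apply walk_refl.
    - destruct HR as [K' [HK' [Sub HR2]]].
      assert (E : zeta L K' = I).
      { apply Hmin. apply zeta_prime; auto. rewrite <- (zetaK I). apply zeta_anti; auto. }
      apply Rk_walk in HR2; auto. apply walk_zeta in HR2. rewrite E in HR2.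
      destruct (W_cases (S m') J J (or_introl eq_refl)) as [E2|E2]; simpl in E2; rewrite E2 in HR2.
      + apply N1. exists m'. split; [lia|auto].
      + apply N2. exists m'. split; [lia|auto]. }
  destruct (SepR n I J HI HJ (Hsep n ltac:(lia))) as [a1 [Ja1 Ha1]].
  destruct (SepR (S n) I J HI HJ (Hsep (S n) ltac:(lia))) as [a2 [Ja2 Ha2]].
  set (a := join a1 a2).
  assert (Ja : J a) by (apply pr_join; auto).
  set (w := iter_negpc L n (vv a)).
  assert (Iw : ~ I w).
  { unfold w. rewrite Vchar; auto. intros Y HY [HR|HR] Ya; apply pr_join in Ya; auto; destruct Ya as [Y1 Y2].
    - apply (Ha1 Y HY HR Y1).
    - apply (Ha2 Y HY HR Y2). }
  assert (Ew : w = pc (neg w)). { unfold w. apply Hid. }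
  assert (Hdown : forall K K', prime_ideal L K' -> subsetP L K' K -> ~ K w -> ~ K' w).
  { intros K K' HK' S' NK K'w. apply NK. apply S'. auto. }
  assert (Hz : forall K, prime_ideal L K -> ~ K w -> ~ zeta L K w).
  { intros K HK NK. rewrite Ew in NK. rewrite box in NK; auto. apply NK. apply zeta_prime; auto. apply sub_refl. }
  set (th := fun a1 b1 : L => forall K, prime_ideal L K -> ~ K w -> (K a1 <-> K b1)).
  assert (Hth : congruence L th).
  { unfold th. split; [|split; [|split; [|split; [|split; [|split]]]]].
    - intros; tauto.
    - intros x y H K HK NK. specialize (H K HK NK). tauto.
    - intros x y z H1 H2 K HK NK. specialize (H1 K HK NK). specialize (H2 K HK NK). tauto.
    - intros x y z t H1 H2 K HK NK. rewrite !pr_meet; auto. specialize (H1 K HK NK). specialize (H2 K HK NK). tauto.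
    - intros x y z t H1 H2 K HK NK. rewrite !pr_join; auto. specialize (H1 K HK NK). specialize (H2 K HK NK). tauto.
    - intros x y H K HK NK.
      assert (~ K (pc x) <-> ~ K (pc y)).
      { rewrite (star K x HK), (star K y HK). split; intros H3 K' HK' S'.
        - apply (proj1 (H K' HK' (Hdown K K' HK' S' NK))). apply H3; auto.
        - apply (proj2 (H K' HK' (Hdown K K' HK' S' NK))). apply H3; auto. }
      split; intro H4; apply NNPP; intro H5; [apply (proj2 H0) in H5|apply (proj1 H0) in H5]; auto.
    - intros x y H K HK NK.
      assert (HZK := H (zeta L K) (zeta_prime K HK) (Hz K HK NK)).
      rewrite !zeta_neg in HZK. split; intro H4; apply NNPP; intro H5; tauto. }
  destruct (proj2 Hs th Hth) as [E|E].
  - assert (w = top).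
    { apply (proj1 (E w top)). intros K HK NK. split; intro H; [contradiction|]. exfalso. apply (pr_top K HK H). }
    set (K0 := zz n J).
    assert (HK0 : prime_ideal L K0) by (apply zz_prime; auto).
    assert (HR : Rk n K0 J). { assert (H1 := Rk_zz_self n K0 HK0). unfold K0 in H1 at 2. rewrite zz_zz in H1. exact H1. }
    assert (NK0 : ~ K0 w) by (rewrite H; apply pr_top; auto).
    unfold w in NK0. rewrite T_lemma in NK0; auto. apply (NK0 J HJ HR).
    unfold vv. apply pr_meet; auto.
  - assert (th bot top) by (apply E; auto).
    specialize (H I HI Iw). apply (pr_top I HI). apply H. apply pr_bot; auto.
Qed.

Lemma B_min {L : pmAlgebra} n : regular L -> satisfies_Mn_identity L n -> simple L ->
  forall I J : L -> Prop, prime_ideal L I -> prime_ideal L J ->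
  (forall K, prime_ideal L K -> subsetP L K I -> K = I) ->
  ~ ell_le L I J n -> ~ ell_le L I (zeta L J) n -> False.
Proof.
  intros Hreg Hid Hs I J HI HJ Hmin N1 N2.
  destruct (classic (exists K, prime_ideal L K /\ subsetP L J K /\ K <> J)) as [[K [HK [SK NK]]]|Nm].
  - apply (B_core n Hid Hs I (zeta L J)); auto. apply zeta_prime; auto.
    + intros K' HK' S'. apply NNPP. intro NE.
      apply (no3chain Hreg (zeta L K') J K (zeta_prime K' HK') HJ HK).
      * rewrite <- (zetaK J). apply zeta_anti. auto.
      * auto.
      * intro E. apply NE. rewrite <- E, zetaK. auto.
      * auto.
    + rewrite zetaK. auto.
  - apply (B_core n Hid Hs I J); auto.
    intros K HK S'. apply NNPP. intro NE. apply Nm. eauto.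
Qed.

Theorem corollary4p3 (L : pmAlgebra) (n : nat) :
  nontrivial L -> regular L ->
  ((in_Mn L n /\ simple L) <->
   (forall I J : L -> Prop, prime_ideal L I -> prime_ideal L J ->
      ell_le L I J n \/ ell_le L I (zeta L J) n)).
Proof.
  intros Hnt Hreg. split.
  - intros [[_ Hid] Hs] I J HI HJ. apply NNPP. intro Hn. apply not_or_and in Hn. destruct Hn as [N1 N2].
    destruct (classic (exists K, prime_ideal L K /\ subsetP L K I /\ K <> I)) as [[K [HK [S NK]]]|Nm].
    + (* I maximal, zeta I minimal *)
      apply (B_min n Hreg Hid Hs (zeta L I) (zeta L J)); auto; try apply zeta_prime; auto.
      * intros K' HK' S'. apply NNPP. intro NE.
        apply (no3chain Hreg K I (zeta L K') HK HI (zeta_prime K' HK') S).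
        -- rewrite <- (zetaK I). apply zeta_anti. auto.
        -- auto.
        -- intro E. apply NE. rewrite E, zetaK. auto.
      * intros [k [Hk HW]]. apply N1. exists k. split; auto. apply walk_zeta in HW. rewrite !zetaK in HW. auto.
      * intros [k [Hk HW]]. apply N2. exists k. split; auto. apply walk_zeta in HW. rewrite !zetaK in HW. auto.
    + apply (B_min n Hreg Hid Hs I J); auto.
      intros K HK S. apply NNPP. intro NE. apply Nm. eauto.
  - intro HC. split. split; auto. apply identity_from_C; auto. apply (simple_from_C n); auto.
Qed.
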